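(* Let $\hat g:\mathbb C\to\mathbb C$ be the map defined in the context. Then $\hat g$ is differentiable almost everywhere and $$|\det D\hat g(z)|\ge\frac{\sin\theta_{\mathcal S}\,\min_{x\in Q}|\mathfrak h_{gen}(x)|\,\lambda\,e^{2\lambda\operatorname{Re} z}}{2L}\quad\text{for almost every }z\in\mathbb C.$$
   Context: Let $Q=[-1,1]^2$ and let $\mathfrak h_{gen}=(\mathfrak h_{gen,1},\mathfrak h_{gen,2},\mathfrak h_{gen,3}):Q\to\mathbb R^3$ be a sense-preserving $L$-bi-Lipschitz map ($|a-b|/L\le|\mathfrak h_{gen}(a)-\mathfrak h_{gen}(b)|\le L|a-b|$) onto a surface $\mathcal S=\mathfrak h_{gen}(Q)$ such that: (1) $\mathcal S\subset\{x_3\ge0\}$; (2) $\mathfrak h_{gen}(\partial Q)$ lies in the plane $x_3=0$; (3) for each $x\in Q$ the ray from $0$ through $\mathfrak h_{gen}(x)$ meets $\mathcal S$ only at $\mathfrak h_{gen}(x)$; (4) (non-tangential position vector property) there are $\theta_{\mathcal S}\in(0,\pi/2)$ and $\varepsilon>0$ such that for all distinct $w,z\in\mathcal S$ with $|w-z|\le\varepsilon$ the acute angle between the line through $0$ and $z$ and the line through $w$ and $z$ is greater than $\theta_{\mathcal S}$; (5) $\min_{x\in Q}|\mathfrak h_{gen}(x)|>0$. Assume also $\mathfrak h_{gen,1}(t,t)=\mathfrak h_{gen,2}(t,t)$, $\mathfrak h_{gen,1}(t,-t)=-\mathfrak h_{gen,2}(t,-t)$ for $t\in[-1,1]$, $\mathfrak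 h_{gen}(0,0)=(0,0,1)$ and $\sup_{x\in Q}|\mathfrak h_{gen}(x)|=1$. Let $\lambda\ge1$. Define $\hat g$ as follows: for $z=x+iy$ with $y\in[4k-1,4k+1]$, $k\in\mathbb Z$, let $\hat g(z)=e^{\lambda x}\big(\mathfrak h_{gen,3}(y-4k,y-4k)+i\,\mathfrak h_{gen,1}(y-4k,y-4k)\big)$; for $y\in[4k+1,4k+3]$ let $\hat g(z)=\hat g(\bar z+2i)$. (This is the conjugate, via $(x_1,x_1,x_3)\mapsto(x_3+ix_1)/\lambda$, of the generalized Zorich map $\mathcal Z_{gen}$ built from $h_{gen}=\lambda\mathfrak h_{gen}(\cdot/\lambda)$, restricted to the invariant plane $x_1=x_2$.) *)

(* Defs.v *)
From HB Require Import structures.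
From mathcomp Require Import all_boot all_order all_algebra.
From mathcomp Require Import all_classical all_reals all_analysis.
Set Implicit Arguments. Unset Strict Implicit. Unset Printing Implicit Defensive.
Import Order.TTheory GRing.Theory Num.Theory.
Import numFieldNormedType.Exports.
Local Open Scope classical_set_scope.
Local Open Scope ring_scope.

Section Defs.
Variable R : realType.

(* Points of R^2 are pairs (x1, x2); points of R^3 are triples ((x1, x2), x3). *)
Definition e1 (v : R * R * R) : R := v.1.1.
Definition e2 (v : R * R * R) : R := v.1.2.
Definition e3 (v : R * R * R) : R := v.2.

(* Euclidean norms / inner product (the library norm on products is the max norm). *)
Definition enorm2 (a : R * R) : R := Num.sqrt (a.1 ^+ 2 + a.2 ^+ 2).
Definition dot3 (u v : R * R * R) : R := e1 u * e1 v + e2 u * e2 v + e3 u * e3 v.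
Definition enorm3 (v : R * R * R) : R := Num.sqrt (dot3 v v).

Definition det3 (u v w : R * R * R) : R :=
  e1 u * (e2 v * e3 w - e3 v * e2 w)
  - e1 v * (e2 u * e3 w - e3 u * e2 w)
  + e1 w * (e2 u * e3 v - e3 u * e2 v).

Definition Qsq : set (R * R) := [set x | -1 <= x.1 <= 1 /\ -1 <= x.2 <= 1].
Definition Qbd : set (R * R) :=
  [set x | Qsq x /\ (`|x.1| = 1 \/ `|x.2| = 1)].
Definition Qint : set (R * R) := [set x | -1 < x.1 < 1 /\ -1 < x.2 < 1].

Definition leb2 := (@lebesgue_measure R \x @lebesgue_measure R)%E.

Definition biLipschitz_on_Q (L : R) (h : R * R -> R * R * R) : Prop :=
  forall a b, Qsq a -> Qsq b ->
    enorm2 (a - b) / L <= enorm3 (h a - h b) /\ enorm3 (h a - h b) <= L * enorm2 (a - b).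

(* Sense-preserving: the cone map (x, t) |-> t * h x (equivalently the
   generalized Zorich map x |-> e^{x3} h(x1,x2)) is orientation preserving,
   i.e. its Jacobian t^2 det[d1 h, d2 h, h] is >= 0 almost everywhere. *)
Definition sense_preserving (h : R * R -> R * R * R) : Prop :=
  {ae leb2, forall x, Qint x -> differentiable h x ->
     0 <= det3 ('d h x (1, 0)) ('d h x (0, 1)) (h x)}.

(* acute angle between the line through 0 and z and the line through w and z *)
Definition acute_angle (z w : R * R * R) : R :=
  acos (`|dot3 z (w - z)| / (enorm3 z * enorm3 (w - z))).

(* the curve t |-> h(t, t) on the invariant plane, in complex coordinates
   (x3 + i x1) written as pairs (Re, Im) *)
Definition gamma_diag (h : R * R -> R * R * R) (t : R) : R * R :=
  (e3 (h (t, t)), e1 (h (t, t))).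

(* ghat(x + i y): for y in [4k-1, 4k+1], e^{lam x} gamma(y - 4k);
   for y in [4k+1, 4k+3], ghat(conj z + 2i) = ghat(x + i(2 - y)),
   which equals e^{lam x} gamma(2 - y + 4k).  Here k = floor((y+1)/4). *)
Definition ghat (h : R * R -> R * R * R) (lam : R) (z : R * R) : R * R :=
  let x := z.1 in let y := z.2 in
  let k : R := (Num.floor ((y + 1) / 4))%:~R in
  let t := y - 4 * k in
  let s := if t <= 1 then t else 2 - t in
  (expR (lam * x) * (gamma_diag h s).1, expR (lam * x) * (gamma_diag h s).2).

Definition jac_det2 (f : R * R -> R * R) (z : R * R) : R :=
  ('d f z (1, 0)).1 * ('d f z (0, 1)).2 - ('d f z (0, 1)).1 * ('d f z (1, 0)).2.

End Defs.

Arguments Qsq {R}.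
Arguments Qbd {R}.
Arguments Qint {R}.

(* Main.v *)
Require Import Defs.
From HB Require Import structures.
From mathcomp Require Import all_boot all_order all_algebra.
From mathcomp Require Import all_classical all_reals all_analysis.
From mathcomp Require Import ring lra.
Set Implicit Arguments. Unset Strict Implicit. Unset Printing Implicit Defensive.
Import Order.TTheory GRing.Theory Num.Theory.
Import numFieldNormedType.Exports.
Local Open Scope classical_set_scope.
Local Open Scope ring_scope.

Definition clampab {R : realType} (a b x : R) : R := Num.max a (Num.min b x).

Lemma clampE (R : realType) (a b x : R) : a < b ->
  clampab a b x = if x <= a then a else if b <= x then b else x.
Proof.
move=> ab; rewrite /clampab maxEle minEle.
have [bx|xb] := leP b x.
  have xa : (x <= a) = false by apply: negbTE; rewrite -ltNge; exact: (lt_le_trans ab bx).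
  by rewrite xa (ltW ab).
have [xa|ax] := leP x a.
  by have [ax'|//] := leP a x; apply/eqP; rewrite eq_le ax' xa.
by rewrite (ltW ax).
Qed.

Lemma clamp_in (R : realType) (a b x : R) : a < b -> a <= clampab a b x <= b.
Proof. move=> ab; rewrite clampE //; case: (leP x a) => ?; case: (leP b x) => ?; lra. Qed.

Lemma clamp_id (R : realType) (a b x : R) : a < b -> a <= x <= b -> clampab a b x = x.
Proof. move=> ab; rewrite clampE // => /andP[h1 h2]; case: (leP x a) => ?; case: (leP b x) => ?; lra. Qed.

Lemma clamp_lip (R : realType) (a b x y : R) : a < b ->
  `|clampab a b x - clampab a b y| <= `|x - y|.
Proof.
move=> ab; rewrite !clampE // ler_norml.
case: (ler0P (x - y)) => h;
case: (leP x a) => ?; case: (leP b x) => ?; case: (leP y a) => ?; case: (leP b y) => ? /=; lra.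
Qed.

Lemma clamp_mono (R : realType) (a b : R) : a < b -> {homo clampab a b : x y / x <= y}.
Proof. move=> ab x y; rewrite !clampE // => xy; case: (leP x a) => ?; case: (leP b x) => ?; case: (leP y a) => ?; case: (leP b y) => ? /=; lra. Qed.

Lemma clamp_idem (R : realType) (a b x : R) : a < b ->
  clampab a b (clampab a b x) = clampab a b x.
Proof. by move=> ab; rewrite clamp_id // clamp_in. Qed.

Definition Gab {R : realType} (f : R -> R) (a b K x : R) : R :=
  f (clampab a b x) + K * clampab a b x.

Lemma Gab_nd (R : realType) (f : R -> R) (a b K : R) : a < b -> 0 < K ->
  (forall x y, a <= x <= b -> a <= y <= b -> `|f x - f y| <= K * `|x - y|) ->
  {homo Gab f a b K : x y / x <= y}.
Proof.
move=> ab K0 fK x y xy; rewrite /Gab.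
have cxy := clamp_mono ab xy.
have := fK _ _ (clamp_in x ab) (clamp_in y ab).
rewrite (ler0_norm (x := clampab a b x - clampab a b y)); last by lra.
move: (clampab a b x) (clampab a b y) cxy => u v uv.
case: (ler0P (f u - f v)) => ?; rewrite ?ger0_norm ?ler0_norm //; nra.
Qed.

Lemma Gab_lip (R : realType) (f : R -> R) (a b K : R) : a < b -> 0 < K ->
  (forall x y, a <= x <= b -> a <= y <= b -> `|f x - f y| <= K * `|x - y|) ->
  forall x y, `|Gab f a b K x - Gab f a b K y| <= (2 * K) * `|x - y|.
Proof.
move=> ab K0 fK x y; rewrite /Gab.
have := fK _ _ (clamp_in x ab) (clamp_in y ab).
have := clamp_lip x y ab.
move: (clampab a b x) (clampab a b y) => u v h1 h2.
have e : f u + K * u - (f v + K * v) = (f u - f v) + K * (u - v) by ring.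
rewrite e (le_trans (ler_normD _ _)) // normrM (gtr0_norm K0).
have : K * `|u - v| <= K * `|x - y| by rewrite ler_pM2l.
lra.
Qed.

Lemma lip_cont (R : realType) (g : R -> R) (C : R) : 0 < C ->
  (forall x y, `|g x - g y| <= C * `|x - y|) -> continuous g.
Proof.
move=> C0 gC x; apply/cvgrPdist_le => e e0.
near=> y.
apply: (le_trans (gC x y)).
rewrite -ler_pdivlMl //.
near: y.
have Ce : 0 < C^-1 * e by rewrite mulr_gt0 // invr_gt0.
exact: (@cvgr_dist_le _ R^o _ (nbhs x) _ id x (@cvg_id _ (nbhs x)) _ Ce).
Unshelve. all: by end_near. Qed.

Lemma Gab_bnd (R : realType) (f : R -> R) (a b K : R) : a < b -> 0 < K ->
  (forall x y, a <= x <= b -> a <= y <= b -> `|f x - f y| <= K * `|x - y|) ->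
  forall x, Gab f a b K a <= Gab f a b K x <= Gab f a b K b.
Proof.
move=> ab K0 fK x.
have ex : Gab f a b K x = Gab f a b K (clampab a b x) by rewrite /Gab clamp_idem.
rewrite ex; have /andP[h1 h2] := clamp_in x ab.
by rewrite !(Gab_nd ab K0 fK).
Qed.

Section LipSec.
Variables (R : realType) (f : R -> R) (a b K : R).
Hypotheses (ab : a < b) (K0 : 0 < K)
  (fK : forall x y, a <= x <= b -> a <= y <= b -> `|f x - f y| <= K * `|x - y|).

Definition GG : R -> R := Gab f a b K.

Let GG_nd : {homo GG : x y / x <= y}.
Proof. exact: Gab_nd. Qed.

Let GG_cont : continuous GG.
Proof.
apply: (@lip_cont _ _ (2 * K)); first by rewrite mulr_gt0.
exact: Gab_lip.
Qed.

HB.instance Definition _ := isCumulative.Build R _ R GG GG_nd (right_continuousW GG_cont).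

Definition nuG : set (measurableTypeR R) -> \bar R := lebesgue_stieltjes_measure GG.
HB.instance Definition _ := Measure.on nuG.

Lemma nuG_itv x y : x <= y -> nuG `]x, y]%classic = (GG y - GG x)%:E.
Proof.
move=> xy; rewrite /nuG /lebesgue_stieltjes_measure /measure_extension /=.
rewrite measurable_mu_extE /=; last exact: is_ocitv.
by rewrite wlength_itv_bnd.
Qed.

Lemma nuG_setT : (nuG setT <= (GG b - GG a)%:E)%E.
Proof.
rewrite -(bigcup_itvT false false).
pose I n : set R := `]- (n%:R), n%:R]%classic.
have cI : (nuG \o I) n @[n --> \oo] --> nuG (\bigcup_n I n).
  apply: nondecreasing_cvg_mu; rewrite /I//; first exact: bigcup_measurable.
  by move=> *; apply/subsetPset/subset_itv; rewrite leBSide/= ?lerN2 ler_nat.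
rewrite -(cvg_lim _ cI) //; apply: lime_le; first by apply/cvg_ex; eexists; exact: cI.
apply: nearW => n /=; rewrite /I nuG_itv; last first.
  by rewrite (@le_trans _ _ 0) // ?oppr_le0.
rewrite lee_fin; have := Gab_bnd ab K0 fK n%:R; have := Gab_bnd ab K0 fK (1 *- n).
rewrite /GG; lra.
Qed.

Let nuG_fin : fin_num_fun nuG.
Proof.
move=> U mU; rewrite ge0_fin_numE ?measure_ge0 //.
apply: (le_lt_trans _ (le_lt_trans nuG_setT (ltry _))).
by apply: le_measure; rewrite ?inE.
Qed.

HB.instance Definition _ := @Measure_isFinite.Build _ _ _ nuG nuG_fin.

Lemma wG_le (B : set (ocitv_type R)) : ocitv B ->
  (wlength GG B <= (2 * K)%:E * wlength idfun B)%E.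
Proof.
move=> /ocitvP [->|[[x y] /= xy ->]]; first by rewrite !wlength0 mule0.
rewrite !wlength_itv_bnd ?(ltW xy) // -EFinM lee_fin.
have := Gab_lip ab K0 fK y x; rewrite /GG /=.
rewrite (gtr0_norm (x := y - x)) ?subr_gt0 //.
by move=> /(le_trans (ler_norm _)).
Qed.

Lemma nuG_le_leb (A : set (measurableTypeR R)) : measurable A ->
  (nuG A <= (2 * K)%:E * lebesgue_measure A)%E.
Proof.
move=> mA.
rewrite /nuG /lebesgue_measure /lebesgue_stieltjes_measure /measure_extension /=.
rewrite /mu_ext -ereal_inf_pZl ?mulr_gt0 //.
apply: le_ereal_inf_tmp => _ [_ [B [mB AB] <-] <-].
apply: (@le_trans _ _ (\sum_(k <oo) wlength GG (B k))%E).
  by apply: ereal_inf_lbound; exists B.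
rewrite -nneseriesZl; last by move=> i _; exact: wlength_ge0.
apply: lee_nneseries; first by move=> i _ _; exact: wlength_ge0.
by move=> n _; apply: wG_le; exact: mB.
Qed.

Lemma nuG_ac : charge_of_finite_measure nuG `<< lebesgue_measure.
Proof.
move=> N NN A mA AN; have l0 := NN A mA AN.
apply/eqP; rewrite eq_le; apply/andP; split; last exact: (measure_ge0 nuG).
by have := nuG_le_leb mA; rewrite l0 mule0.
Qed.

Let phi := Radon_Nikodym (charge_of_finite_measure nuG) lebesgue_measure.
Let fphi x := fine (phi x).

Let fphiE : EFin \o fphi = phi.
Proof. by apply/funext => x /=; rewrite /fphi fineK //; apply: Radon_Nikodym_fin_num; exact: nuG_ac. Qed.

Let int_fphi : lebesgue_measure.-integrable setT (EFin \o fphi).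
Proof. by rewrite fphiE; apply: Radon_Nikodym_integrable; exact: nuG_ac. Qed.

Let nuG_int (A : set (measurableTypeR R)) : measurable A -> nuG A = (\int[lebesgue_measure]_(x in A) (fphi x)%:E)%E.
Proof.
move=> mA; have -> : nuG A = charge_of_finite_measure nuG A by [].
rewrite (@Radon_Nikodym_integral _ _ _ _ _ A nuG_ac mA).
by apply: eq_integral => x _; rewrite /fphi fineK //; apply: Radon_Nikodym_fin_num; exact: nuG_ac.
Qed.

Lemma lip_ae_derivable : {ae lebesgue_measure, forall x, a < x < b -> derivable f x 1}.
Proof.
have h1 : forall y, lebesgue_measure.-integrable [set` Interval (BRight a) (BRight y)] (EFin \o fphi).
  by move=> y; apply: (integrableS measurableT) => //.
have h2 : locally_integrable [set: R] fphi by apply: open_integrable_locally => //; exact: openT.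
have := FTC1 h1 h2.
apply: filterS; first exact: (ae_filter_ringOfSetsType lebesgue_measure).
move=> x Hx /andP[ax xb].
have : (BRight a < BRight x)%O by rewrite ltBSide.
move=> /Hx [dF _].
have dG0 : derivable (fun y => GG y - GG a) x 1.
  apply: (near_eq_derivable _ dF); near=> y.
  rewrite /Rintegral -nuG_int // nuG_itv /= //.
  by apply: ltW; near: y; exact: lt_nbhsr.
have dG : derivable GG x 1.
  have : derivable ((fun y => GG y - GG a) + cst (GG a)) x 1.
    by apply: derivableD => //; exact: derivable_cst.
  move=> h; apply: (near_eq_derivable _ h); near=> y => /=.
  exact: subrK.
have : derivable (GG - K \*: id) x 1 by apply: derivableB => //; apply: derivableZ; exact: derivable_id.
move=> h; apply: (near_eq_derivable _ h); near=> y => /=.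
have cy : clampab a b y = y.
  apply: clamp_id => //; apply/andP; split; apply: ltW.
    by near: y; exact: lt_nbhsr.
  by near: y; exact: lt_nbhsl.
have -> : (GG - K \*: id) y = GG y - K * y by [].
rewrite /GG /Gab cy; ring.
Unshelve. all: by end_near. Qed.

End LipSec.

Definition Sy {R : realType} (y : R) : R :=
  let k : R := (Num.floor ((y + 1) / 4))%:~R in
  let t := y - 4 * k in if t <= 1 then t else 2 - t.

Lemma Sy_range (R : realType) (y : R) : -1 <= Sy y <= 1.
Proof.
rewrite /Sy; have := floor_itv ((y + 1) / 4).
rewrite intrD; move: (Num.floor _)%:~R => k /andP[h1 h2].
by case: (leP (y - 4 * k) 1) => h; lra.
Qed.

Lemma Sy_plus (R : realType) (k : int) (u : R) :
  4 * k%:~R - 1 <= u <= 4 * k%:~R + 1 -> Sy u = u - 4 * k%:~R.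
Proof.
move=> /andP[h1 h2]; rewrite /Sy (@floor_def _ _ k); last first.
  by rewrite intrD; apply/andP; split; lra.
by rewrite ifT //; lra.
Qed.

Lemma Sy_minus (R : realType) (k : int) (u : R) :
  4 * k%:~R + 1 <= u <= 4 * k%:~R + 3 -> Sy u = 4 * k%:~R + 2 - u.
Proof.
move=> /andP[h1 h2]; have [e|ne] := eqVneq u (4 * k%:~R + 3).
  rewrite (@Sy_plus _ (k + 1)); rewrite intrD; first lra.
  by apply/andP; split; lra.
have h3 : u < 4 * k%:~R + 3 by rewrite lt_neqAle ne h2.
rewrite /Sy (@floor_def _ _ k); last first.
  by rewrite intrD; apply/andP; split; lra.
by case: leP => h; lra.
Qed.

Lemma enorm3_e1 (R : realType) (v : R * R * R) : `|e1 v| <= enorm3 v.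
Proof.
have h1 := sqr_ge0 (e1 v); have h2 := sqr_ge0 (e2 v); have h3 := sqr_ge0 (e3 v).
rewrite /enorm3 /dot3 -sqrtr_sqr ler_sqrt; rewrite !expr2 in h1 h2 h3 *; lra.
Qed.
Lemma enorm3_e3 (R : realType) (v : R * R * R) : `|e3 v| <= enorm3 v.
Proof.
have h1 := sqr_ge0 (e1 v); have h2 := sqr_ge0 (e2 v); have h3 := sqr_ge0 (e3 v).
rewrite /enorm3 /dot3 -sqrtr_sqr ler_sqrt; rewrite !expr2 in h1 h2 h3 *; lra.
Qed.

Lemma enorm2_diag (R : realType) (s s' : R) : enorm2 ((s, s) - (s', s')) <= 2 * `|s - s'|.
Proof.
have -> : 2 * `|s - s'| = Num.sqrt ((2 * (s - s')) ^+ 2) by rewrite sqrtr_sqr normrM ger0_norm.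
have h1 := sqr_ge0 (s - s').
rewrite /enorm2 /= ler_sqrt; rewrite !expr2 in h1 *; nra.
Qed.

Lemma e1_lip (R : realType) (v w : R * R * R) : `|e1 v - e1 w| <= enorm3 (v - w).
Proof. exact: (enorm3_e1 (v - w)). Qed.
Lemma e3_lip (R : realType) (v w : R * R * R) : `|e3 v - e3 w| <= enorm3 (v - w).
Proof. exact: (enorm3_e3 (v - w)). Qed.

Lemma Qsq_diag (R : realType) (s : R) : -1 <= s <= 1 -> Qsq (s, s).
Proof. by move=> h; split. Qed.

Lemma Fe_lip (R : realType) (h : R * R -> R * R * R) (L : R) (e : R * R * R -> R) :
  0 < L -> biLipschitz_on_Q L h -> (forall v w, `|e v - e w| <= enorm3 (v - w)) ->
  forall s s', -1 <= s <= 1 -> -1 <= s' <= 1 ->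
  `|e (h (s, s)) - e (h (s', s'))| <= 2 * L * `|s - s'|.
Proof.
move=> L0 bil he s s' hs hs'.
apply: (le_trans (he _ _)).
apply: (le_trans (bil _ _ (Qsq_diag hs) (Qsq_diag hs')).2).
rewrite [2 * L]mulrC -mulrA ler_pM2l //; exact: enorm2_diag.
Qed.

Lemma ae_and d (T : measurableType d) (R : realType) (mu : {measure set T -> \bar R}) (P Q : T -> Prop) :
  {ae mu, forall x, P x} -> {ae mu, forall x, Q x} -> {ae mu, forall x, P x /\ Q x}.
Proof. move=> hP hQ. exact: (@filterS2 _ _ (ae_filter_ringOfSetsType mu) _ _ _ (fun x a b => conj a b) hP hQ). Qed.

Lemma piece_ae (R : realType) (h : R * R -> R * R * R) (L : R) (e : R * R * R -> R) :
  0 < L -> biLipschitz_on_Q L h -> (forall v w, `|e v - e w| <= enorm3 (v - w)) ->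
  {ae lebesgue_measure, forall y : R, forall k : int,
     (4 * k%:~R - 1 < y < 4 * k%:~R + 1 -> derivable (fun u => e (h (Sy u, Sy u))) y 1) /\
     (4 * k%:~R + 1 < y < 4 * k%:~R + 3 -> derivable (fun u => e (h (Sy u, Sy u))) y 1)}.
Proof.
move=> L0 bil he.
pose G := fun u : R => e (h (Sy u, Sy u)).
have L2 : 0 < 2 * L by rewrite mulr_gt0.
have P1 : forall k : int, {ae lebesgue_measure, forall y,
    4 * k%:~R - 1 < y < 4 * k%:~R + 1 -> derivable G y 1}.
  move=> k; apply: (@lip_ae_derivable _ G _ _ (2 * L)) => //; first lra.
  move=> u u' hu hu'; rewrite /G.
  have := Fe_lip L0 bil he (Sy_range u) (Sy_range u').
  rewrite (Sy_plus hu) (Sy_plus hu').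
  by rewrite (_ : u - 4 * k%:~R - (u' - 4 * k%:~R) = u - u') //; ring.
have P2 : forall k : int, {ae lebesgue_measure, forall y,
    4 * k%:~R + 1 < y < 4 * k%:~R + 3 -> derivable G y 1}.
  move=> k; apply: (@lip_ae_derivable _ G _ _ (2 * L)) => //; first lra.
  move=> u u' hu hu'; rewrite /G.
  have := Fe_lip L0 bil he (Sy_range u) (Sy_range u').
  rewrite (Sy_minus hu) (Sy_minus hu').
  rewrite (_ : 4 * k%:~R + 2 - u - (4 * k%:~R + 2 - u') = - (u - u')) ?normrN //; ring.
have Pn : forall n : nat, {ae lebesgue_measure, forall y,
   ((4 * (n%:Z)%:~R - 1 < y < 4 * (n%:Z)%:~R + 1 -> derivable G y 1) /\
   (4 * (n%:Z)%:~R + 1 < y < 4 * (n%:Z)%:~R + 3 -> derivable G y 1)) /\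
   ((4 * (Negz n)%:~R - 1 < y < 4 * (Negz n)%:~R + 1 -> derivable G y 1) /\
   (4 * (Negz n)%:~R + 1 < y < 4 * (Negz n)%:~R + 3 -> derivable G y 1))}.
  by move=> n; apply: ae_and; apply: ae_and.
have := ae_foralln Pn.
apply: filterS => y Hy [] n; by have [] := Hy n.
Qed.

Lemma ae_neq (R : realType) (r : R) : {ae lebesgue_measure, forall y : R, y != r}.
Proof.
exists [set r]; split => //; first exact: lebesgue_measure_set1.
by move=> y /= /negP; rewrite negbK => /eqP ->.
Qed.

Lemma ae_not_odd (R : realType) : {ae lebesgue_measure, forall y : R, forall k : int,
   y != 4 * k%:~R + 1 /\ y != 4 * k%:~R - 1}.
Proof.
have Pn : forall n : nat, {ae lebesgue_measure, forall y : R,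
   (y != 4 * (n%:Z)%:~R + 1 /\ y != 4 * (n%:Z)%:~R - 1) /\
   (y != 4 * (Negz n)%:~R + 1 /\ y != 4 * (Negz n)%:~R - 1)}.
  by move=> n; apply: ae_and; apply: ae_and; exact: ae_neq.
have := ae_foralln Pn.
apply: filterS => y Hy [] n; by have [] := Hy n.
Qed.

Lemma CS3 (R : realType) (u v : R * R * R) : `|dot3 u v| <= enorm3 u * enorm3 v.
Proof.
rewrite /enorm3 -sqrtrM; last by rewrite /dot3; nra.
rewrite -sqrtr_sqr ler_sqrt; last by rewrite /dot3; nra.
rewrite /dot3.
have h1 := sqr_ge0 (e1 u * e2 v - e2 u * e1 v).
have h2 := sqr_ge0 (e1 u * e3 v - e3 u * e1 v).
have h3 := sqr_ge0 (e2 u * e3 v - e3 u * e2 v).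
rewrite !expr2 in h1 h2 h3 *; nra.
Qed.

Lemma enorm3_ge0 (R : realType) (u : R * R * R) : 0 <= enorm3 u.
Proof. exact: sqrtr_ge0. Qed.

Lemma enorm3_sqr (R : realType) (u : R * R * R) : enorm3 u ^+ 2 = dot3 u u.
Proof. by rewrite /enorm3 sqr_sqrtr // /dot3; nra. Qed.

Lemma angle_sq (R : realType) (z w : R * R * R) (theta : R) :
  0 < theta < pi / 2 -> 0 < enorm3 z -> 0 < enorm3 (w - z) ->
  theta < acute_angle z w ->
  dot3 z (w - z) ^+ 2 <= cos theta ^+ 2 * (dot3 z z * dot3 (w - z) (w - z)).
Proof.
move=> /andP[th0 th1] nz nw; rewrite /acute_angle.
set D := dot3 z (w - z).
set r := `|D| / (enorm3 z * enorm3 (w - z)).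
have nzw : 0 < enorm3 z * enorm3 (w - z) by rewrite mulr_gt0.
have r0 : 0 <= r by rewrite divr_ge0 // ltW.
have r1 : r <= 1 by rewrite ler_pdivrMr // mul1r; exact: CS3.
have rin : r \in `[-1, 1] by rewrite in_itv /=; apply/andP; split => //; lra.
have pi0 := pi_gt0 R.
move=> ht.
have r11 : -1 <= r <= 1 by apply/andP; split => //; lra.
have ha : acos r \in `[0, pi] by rewrite in_itv /=; apply/andP; split; [exact: acos_ge0 | exact: acos_lepi].
have hth : theta \in `[0, pi] by rewrite in_itv /=; apply/andP; split; lra.
have hcos : r < cos theta by rewrite -{1}(acosK rin) ltr_cos.
have hD : `|D| < cos theta * (enorm3 z * enorm3 (w - z)).
  by rewrite -ltr_pdivrMr.
have c0 : 0 <= cos theta.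
  by apply: ltW; apply: (le_lt_trans r0).
rewrite -!enorm3_sqr -real_normK ?num_real //.
have := normr_ge0 D.
move: (enorm3 z) (enorm3 (w - z)) hD nz nw => x y hD nz nw hD0.
rewrite !expr2; nra.
Qed.

Lemma loc_plus (R : realType) (k : int) (y : R) : 4 * k%:~R - 1 < y < 4 * k%:~R + 1 ->
  exists2 d, 0 < d & forall u, `|u - y| < d -> `|Sy u - Sy y| = `|u - y|.
Proof.
move=> /andP[h1 h2].
exists (Num.min (y - (4 * k%:~R - 1)) (4 * k%:~R + 1 - y)).
  by rewrite lt_min; apply/andP; split; lra.
move=> u; rewrite lt_min ltr_norml ltr_norml => /andP[/andP[h3 h4] /andP[h5 h6]].
rewrite (@Sy_plus _ k u); last by apply/andP; split; lra.
rewrite (@Sy_plus _ k y); last by apply/andP; split; lra.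
by rewrite (_ : u - 4 * k%:~R - (y - 4 * k%:~R) = u - y) //; ring.
Qed.

Lemma loc_minus (R : realType) (k : int) (y : R) : 4 * k%:~R + 1 < y < 4 * k%:~R + 3 ->
  exists2 d, 0 < d & forall u, `|u - y| < d -> `|Sy u - Sy y| = `|u - y|.
Proof.
move=> /andP[h1 h2].
exists (Num.min (y - (4 * k%:~R + 1)) (4 * k%:~R + 3 - y)).
  by rewrite lt_min; apply/andP; split; lra.
move=> u; rewrite lt_min ltr_norml ltr_norml => /andP[/andP[h3 h4] /andP[h5 h6]].
rewrite (@Sy_minus _ k u); last by apply/andP; split; lra.
rewrite (@Sy_minus _ k y); last by apply/andP; split; lra.
by rewrite (_ : 4 * k%:~R + 2 - u - (4 * k%:~R + 2 - y) = - (u - y)) ?normrN //; ring.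
Qed.

Lemma piece_of (R : realType) (y : R) : (forall k : int, y != 4 * k%:~R + 1 /\ y != 4 * k%:~R - 1) ->
  exists k : int, (4 * k%:~R - 1 < y < 4 * k%:~R + 1) \/ (4 * k%:~R + 1 < y < 4 * k%:~R + 3).
Proof.
move=> Hy; exists (Num.floor ((y + 1) / 4)).
have [n1 n2] := Hy (Num.floor ((y + 1) / 4)).
have := floor_itv ((y + 1) / 4).
rewrite intrD; move: (Num.floor _)%:~R n1 n2 => k n1 n2 /andP[h1 h2].
have l1 : 4 * k - 1 < y by rewrite lt_neqAle eq_sym n2 /=; lra.
have [l2|l2] := ltrP y (4 * k + 1).
  by left; apply/andP; split.
by right; apply/andP; split; [rewrite lt_neqAle eq_sym n1 | ]; lra.
Qed.

Lemma cvg_ge0 (R : realType) (T : Type) (F : set_system T) {FF : ProperFilter F}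
  (f : T -> R) (l : R) : f t @[t --> F] --> l -> (\forall t \near F, 0 <= f t) -> 0 <= l.
Proof.
move=> fl ev; rewrite -(cvg_lim _ fl); last exact: Rhausdorff.
by apply: limr_ge => //; apply/cvg_ex; exists l.
Qed.

Lemma cvg_lin2 (R : realType) (T : Type) (F : set_system T) {FF : Filter F}
  (f g : T -> R) (a b k1 k2 : R) : f t @[t --> F] --> a -> g t @[t --> F] --> b ->
  (k1 * f t + k2 * g t) @[t --> F] --> k1 * a + k2 * b.
Proof. by move=> fa gb; exact: (cvgD (cvgM (cvg_cst k1) fa) (cvgM (cvg_cst k2) gb)). Qed.

Lemma cvg_sq (R : realType) (T : Type) (F : set_system T) {FF : Filter F}
  (f : T -> R) (a : R) : f t @[t --> F] --> a -> (f t * f t) @[t --> F] --> a * a.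
Proof. by move=> fa; apply: cvgM. Qed.

Lemma e1B (R : realType) (v w : R * R * R) : e1 (v - w) = e1 v - e1 w. Proof. by []. Qed.
Lemma e2B (R : realType) (v w : R * R * R) : e2 (v - w) = e2 v - e2 w. Proof. by []. Qed.
Lemma e3B (R : realType) (v w : R * R * R) : e3 (v - w) = e3 v - e3 w. Proof. by []. Qed.

Lemma sq_le (R : realType) (x y : R) : 0 <= x -> x <= y -> x ^+ 2 <= y ^+ 2.
Proof. move=> x0 xy; rewrite !expr2; nra. Qed.

Lemma cross_bound (R : realType) (h : R * R -> R * R * R) (L theta eps hmin : R) :
  0 < L -> biLipschitz_on_Q L h -> 0 < theta < pi / 2 -> 0 < eps ->
  (forall w z, (h @` Qsq) w -> (h @` Qsq) z -> w != z ->
      enorm3 (w - z) <= eps -> theta < acute_angle z w) ->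
  (forall x, Qsq x -> hmin <= enorm3 (h x)) -> 0 < hmin ->
  (forall t, -1 <= t <= 1 -> e1 (h (t, t)) = e2 (h (t, t))) ->
  forall y : R,
  derivable (fun u => e3 (h (Sy u, Sy u))) y 1 ->
  derivable (fun u => e1 (h (Sy u, Sy u))) y 1 ->
  (exists2 d, 0 < d & forall u, `|u - y| < d -> `|Sy u - Sy y| = `|u - y|) ->
  sin theta * hmin / L <=
  `|e3 (h (Sy y, Sy y)) * 'D_1 (fun u => e1 (h (Sy u, Sy u))) y
    - 'D_1 (fun u => e3 (h (Sy u, Sy u))) y * e1 (h (Sy y, Sy y))|.
Proof.
move=> L0 bil th eps0 ang hminle hmin0 diag y df1 df2 [d d0 loc].
pose F1 := fun u : R => e3 (h (Sy u, Sy u)).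
pose F2 := fun u : R => e1 (h (Sy u, Sy u)).
pose Q1 := fun t : R => t^-1 *: ((F1 \o shift y) (t *: 1) - F1 y).
pose Q2 := fun t : R => t^-1 *: ((F2 \o shift y) (t *: 1) - F2 y).
have cQ1 : Q1 t @[t --> 0^'] --> 'D_1 F1 y := df1.
have cQ2 : Q2 t @[t --> 0^'] --> 'D_1 F2 y := df2.
change (sin theta * hmin / L <= `|F1 y * 'D_1 F2 y - 'D_1 F1 y * F2 y|).
set p := 'D_1 F1 y; set q := 'D_1 F2 y.
have s0r := Sy_range y.
set s0 := Sy y in s0r loc *.
set z0 := h (s0, s0).
have hz0 : hmin <= enorm3 z0 by apply: hminle; exact: Qsq_diag.
set a := e1 z0; set c := e3 z0.
have F1y : F1 y = c by [].
have F2y : F2 y = a by [].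
have e2z0 : e2 z0 = a by rewrite /a /z0 diag.
pose N0 := 2 * (a * a) + c * c.
have N0E : dot3 z0 z0 = N0 by rewrite /dot3 e2z0 /N0; ring.
have hN0 : hmin * hmin <= N0.
  have := sq_le (ltW hmin0) hz0; rewrite enorm3_sqr N0E expr2 //.
have th' := th; move/andP: th' => [th0 th1].
have pi0 := pi_gt0 R.
have L2 : 0 < 2 * L by rewrite mulr_gt0.
have ev : \forall t \near 0^',
    0 <= (2 * (Q2 t * Q2 t) + 1 * (Q1 t * Q1 t)) - 2 / (L * L) /\
    0 <= cos theta ^+ 2 * (N0 * (2 * (Q2 t * Q2 t) + 1 * (Q1 t * Q1 t)))
         - ((2 * a) * Q2 t + c * Q1 t) * ((2 * a) * Q2 t + c * Q1 t).
  near=> t.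
  have t0 : t != 0 by near: t; exact: nbhs_dnbhs_neq.
  have td : `|t| < d by near: t; exact: dnbhs0_lt.
  have te : `|t| <= eps / (2 * L) by near: t; apply: dnbhs0_le; rewrite divr_gt0.
  have t2 : 0 < t * t by rewrite -expr2 exprn_even_gt0 //= t0.
  set u := t *: 1 + y.
  have uy : u - y = t by rewrite /u addrK [t *: _]mulr1.
  have hs : `|Sy u - s0| = `|t| by rewrite loc uy.
  have hs2 : (Sy u - s0) * (Sy u - s0) = t * t.
    by rewrite -expr2 -real_normK ?num_real // hs real_normK ?num_real // expr2.
  have s1r := Sy_range u.
  set s1 := Sy u in hs hs2 s1r.
  set w := h (s1, s1).
  have e2w : e2 w = e1 w by rewrite /w diag.
  have Q1d : F1 u - c = t * Q1 t by rewrite /Q1 /= -/u F1y [_ *: _]/(_ * _) mulrA mulfV // mul1r.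
  have Q2d : F2 u - a = t * Q2 t by rewrite /Q2 /= -/u F2y [_ *: _]/(_ * _) mulrA mulfV // mul1r.
  have dW : dot3 (w - z0) (w - z0) = t * t * (2 * (Q2 t * Q2 t) + Q1 t * Q1 t).
    rewrite /dot3 e1B e2B e3B e2w e2z0.
    have -> : e3 w - e3 z0 = t * Q1 t by rewrite -Q1d.
    have -> : e1 w - a = t * Q2 t by rewrite -Q2d.
    ring.
  have dD : dot3 z0 (w - z0) = t * ((2 * a) * Q2 t + c * Q1 t).
    rewrite /dot3 e1B e2B e3B e2w e2z0.
    have -> : e3 w - e3 z0 = t * Q1 t by rewrite -Q1d.
    have -> : e1 w - a = t * Q2 t by rewrite -Q2d.
    rewrite -/a -/c; ring.
  have en2 : enorm2 ((s1, s1) - (s0, s0)) = Num.sqrt (2 * (t * t)).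
    by rewrite /enorm2 /= !expr2 hs2; congr Num.sqrt; ring.
  have [bl bu] := bil _ _ (Qsq_diag s1r) (Qsq_diag s0r).
  rewrite en2 -/w -/z0 in bl bu.
  have A0 : 2 * (t * t) / (L * L) <= t * t * (2 * (Q2 t * Q2 t) + Q1 t * Q1 t).
    have := sq_le _ bl; rewrite enorm3_sqr dW expr_div_n sqr_sqrtr ?expr2; last first.
      by rewrite mulr_ge0 // ltW.
    by apply; rewrite divr_ge0 // ?sqrtr_ge0 // ltW.
  split.
    rewrite subr_ge0 -(@ler_pM2l _ (t * t)) //.
    by apply: (le_trans _ (le_trans A0 _)); rewrite le_eqVlt; apply/orP; left; apply/eqP; ring.
  have nw : 0 < enorm3 (w - z0).
    rewrite /enorm3 sqrtr_gt0 dW; apply: (lt_le_trans _ A0).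
    by apply: divr_gt0; apply: mulr_gt0.
  have nz : 0 < enorm3 z0 by apply: (lt_le_trans hmin0).
  have wz : w != z0.
    apply/negP => /eqP wz; move: nw; rewrite wz subrr /enorm3 /dot3 /e1 /e2 /e3 /=.
    by rewrite !mulr0 !addr0 sqrtr0 ltxx.
  have wle : enorm3 (w - z0) <= eps.
    apply: (le_trans bu).
    have : Num.sqrt (2 * (t * t)) <= 2 * `|t|.
      have h2t : 2 * `|t| = Num.sqrt ((2 * `|t|) ^+ 2) by rewrite sqrtr_sqr normrM normr_id (ger0_norm (x := 2)) .
      rewrite [X in _ <= X]h2t ler_sqrt; last exact: sqr_ge0.
      rewrite exprMn real_normK ?num_real // !expr2; nra.
    move=> hst.
    have : L * Num.sqrt (2 * (t * t)) <= L * (2 * `|t|) by rewrite ler_pM2l.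
    move=> /le_trans; apply.
    rewrite -(@ler_pM2l _ (2 * L)^-1) ?invr_gt0 // mulrA [_^-1 * L]mulrC.
    rewrite (_ : L * (2 * L)^-1 * (2 * `|t|) = `|t|); last first.
      by field; rewrite gt_eqF.
    by rewrite mulrC.
  have hang := ang w z0 (ex_intro2 _ _ (s1, s1) (Qsq_diag s1r) erefl)
    (ex_intro2 _ _ (s0, s0) (Qsq_diag s0r) erefl) wz wle.
  have := angle_sq th nz nw hang.
  rewrite dD N0E dW.
  move=> B0.
  rewrite subr_ge0 -(@ler_pM2l _ (t * t)) //.
  apply: (le_trans _ (le_trans B0 _)).
    by rewrite le_eqVlt; apply/orP; left; apply/eqP; rewrite expr2; ring.
  by rewrite le_eqVlt; apply/orP; left; apply/eqP; ring.
have cL : (2 * (Q2 t * Q2 t) + 1 * (Q1 t * Q1 t)) @[t --> 0^'] --> 2 * (q * q) + 1 * (p * p).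
  by apply: cvg_lin2; apply: cvg_sq.
have cA : (2 * (Q2 t * Q2 t) + 1 * (Q1 t * Q1 t) - 2 / (L * L)) @[t --> 0^']
    --> 2 * (q * q) + 1 * (p * p) - 2 / (L * L).
  by apply: cvgB => //; exact: cvg_cst.
have cD : ((2 * a) * Q2 t + c * Q1 t) @[t --> 0^'] --> (2 * a) * q + c * p.
  by apply: cvg_lin2.
have cB : (cos theta ^+ 2 * (N0 * (2 * (Q2 t * Q2 t) + 1 * (Q1 t * Q1 t)))
         - ((2 * a) * Q2 t + c * Q1 t) * ((2 * a) * Q2 t + c * Q1 t)) @[t --> 0^']
    --> cos theta ^+ 2 * (N0 * (2 * (q * q) + 1 * (p * p))) - ((2 * a) * q + c * p) * ((2 * a) * q + c * p).
  apply: cvgB; last exact: cvg_sq.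
  apply: cvgM; first exact: cvg_cst.
  by apply: cvgM => //; exact: cvg_cst.
have Ainf : 0 <= 2 * (q * q) + 1 * (p * p) - 2 / (L * L).
  by apply: (cvg_ge0 cA); apply: filterS ev => t [].
have Binf : 0 <= cos theta ^+ 2 * (N0 * (2 * (q * q) + 1 * (p * p))) - ((2 * a) * q + c * p) * ((2 * a) * q + c * p).
  by apply: (cvg_ge0 cB); apply: filterS ev => t [].
move: Ainf Binf; rewrite F1y F2y.
set M := 2 * (q * q) + 1 * (p * p).
set D := 2 * a * q + c * p.
move=> Ainf Binf.
have sth : 0 < sin theta by apply: sin_gt0_pi; apply/andP; split => //; lra.
have iden : N0 * M - D * D = 2 * ((c * q - p * a) * (c * q - p * a)).
  by rewrite /N0 /M /D; ring.
have cs := sin2cos2 theta.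
have h1 : sin theta ^+ 2 * (N0 * M) <= 2 * ((c * q - p * a) * (c * q - p * a)).
  rewrite -iden; move: Binf; rewrite cos2sin2 mulrBl mul1r; lra.
have h2 : sin theta ^+ 2 * ((hmin * hmin) * (2 / (L * L))) <= sin theta ^+ 2 * (N0 * M).
  rewrite ler_pM2l ?exprn_gt0 //; apply: ler_pM => //.
    by rewrite mulr_ge0 // ltW.
  by apply: divr_ge0 => //; rewrite mulr_ge0 // ltW.
  lra.
have h3 : (sin theta * hmin / L) ^+ 2 <= (c * q - p * a) ^+ 2.
  have e : (sin theta * hmin / L) ^+ 2 = sin theta ^+ 2 * ((hmin * hmin) * (2 / (L * L))) / 2.
    by field; rewrite gt_eqF.
  rewrite e expr2; lra.
rewrite -sqrtr_sqr -(@ger0_norm _ (sin theta * hmin / L)); last first.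
  by apply: divr_ge0; [rewrite mulr_ge0 // ltW | rewrite ltW].
by rewrite -sqrtr_sqr ler_sqrt // sqr_ge0.
Unshelve. all: by end_near. Qed.

Lemma ghatE (R : realType) (h : R * R -> R * R * R) (lam : R) :
  ghat h lam = fun z => (expR (lam * z.1) * e3 (h (Sy z.2, Sy z.2)),
                         expR (lam * z.1) * e1 (h (Sy z.2, Sy z.2))).
Proof. by []. Qed.

Lemma diff_fst (R : realType) (z : R * R) : differentiable (@fst R R) z.
Proof.
have lin : linear (@fst R R) by [].
pose fL : {linear (R * R)%type -> R} := HB.pack (@fst R R) (GRing.isLinear.Build _ _ _ _ _ lin).
apply: (@linear_differentiable _ _ _ fL).
move=> x; exact: cvg_fst.
Qed.

Lemma diff_snd (R : realType) (z : R * R) : differentiable (@snd R R) z.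
Proof.
have lin : linear (@snd R R) by [].
pose fL : {linear (R * R)%type -> R} := HB.pack (@snd R R) (GRing.isLinear.Build _ _ _ _ _ lin).
apply: (@linear_differentiable _ _ _ fL).
move=> x; exact: cvg_snd.
Qed.

Lemma isd_lin (R : realType) (lam x : R) : is_derive x 1 (fun y : R => lam * y) lam.
Proof.
have H := @is_deriveZ R R R id lam x 1 1 (is_derive_id x 1).
rewrite [lam *: _]mulr1 in H; exact: H.
Qed.

Lemma isd_E (R : realType) (lam x : R) :
  is_derive x 1 (fun y : R => expR (lam * y)) (expR (lam * x) * lam).
Proof.
have -> : (fun y : R => expR (lam * y)) = expR \o (fun y => lam * y) by [].
apply: is_derive1_comp; exact: isd_lin.
Qed.

Lemma diff_ghat (R : realType) (h : R * R -> R * R * R) (lam : R) (z : R * R) :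
  derivable (fun u => e3 (h (Sy u, Sy u))) z.2 1 ->
  derivable (fun u => e1 (h (Sy u, Sy u))) z.2 1 ->
  differentiable (ghat h lam) z.
Proof.
move=> df1 df2; rewrite ghatE.
have dE1 : differentiable (fun x : R => expR (lam * x)) z.1.
  by apply/derivable1_diffP; have [] := isd_E lam z.1.
have dE : differentiable (fun w : R * R => expR (lam * w.1)) z.
  exact: (differentiable_comp (diff_fst z) dE1).
have dF1 : differentiable (fun w : R * R => e3 (h (Sy w.2, Sy w.2))) z.
  exact: (differentiable_comp (diff_snd z) (proj1 (derivable1_diffP _ _) df1)).
have dF2 : differentiable (fun w : R * R => e1 (h (Sy w.2, Sy w.2))) z.
  exact: (differentiable_comp (diff_snd z) (proj1 (derivable1_diffP _ _) df2)).
apply: differentiable_pair.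
  exact: (differentiableM dE dF1).
exact: (differentiableM dE dF2).
Qed.

Lemma D10 (R : realType) (h : R * R -> R * R * R) (lam : R) (z : R * R) :
  differentiable (ghat h lam) z ->
  'd (ghat h lam) z (1, 0) = (expR (lam * z.1) * lam * e3 (h (Sy z.2, Sy z.2)),
                              expR (lam * z.1) * lam * e1 (h (Sy z.2, Sy z.2))).
Proof.
move=> dg; rewrite -deriveE //; apply: cvg_lim; first exact: norm_hausdorff.
have cE : (t^-1 *: (((fun x => expR (lam * x)) \o shift z.1) (t *: 1) - expR (lam * z.1)))
    @[t --> 0^'] --> expR (lam * z.1) * lam.
  by have [dE DE] := isd_E lam z.1; rewrite -DE; exact: dE.
set F1 := e3 _; set F2 := e1 _.
have eqf : (fun t : R => t^-1 *: ((ghat h lam \o shift z) (t *: ((1 : R), (0 : R))) - ghat h lam z)) =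
  (fun t => ((t^-1 *: (((fun x => expR (lam * x)) \o shift z.1) (t *: 1) - expR (lam * z.1))) * F1,
             (t^-1 *: (((fun x => expR (lam * x)) \o shift z.1) (t *: 1) - expR (lam * z.1))) * F2)).
  apply: funext => t; rewrite ghatE /=.
  rewrite scaler0 add0r.
  by apply/pair_equal_spec; split => /=; rewrite -mulrBl scalerAl.
rewrite eqf; exact: (cvg_pair (cvgMl cE) (cvgMl cE)).
Qed.

Lemma D01 (R : realType) (h : R * R -> R * R * R) (lam : R) (z : R * R) :
  derivable (fun u => e3 (h (Sy u, Sy u))) z.2 1 ->
  derivable (fun u => e1 (h (Sy u, Sy u))) z.2 1 ->
  'd (ghat h lam) z (0, 1) = (expR (lam * z.1) * 'D_1 (fun u => e3 (h (Sy u, Sy u))) z.2,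
                              expR (lam * z.1) * 'D_1 (fun u => e1 (h (Sy u, Sy u))) z.2).
Proof.
move=> df1 df2; have dg := diff_ghat lam df1 df2.
rewrite -deriveE //; apply: cvg_lim; first exact: norm_hausdorff.
set E := expR (lam * z.1).
have eqf : (fun t : R => t^-1 *: ((ghat h lam \o shift z) (t *: ((0 : R), (1 : R))) - ghat h lam z)) =
  (fun t => (E * (t^-1 *: (((fun u => e3 (h (Sy u, Sy u))) \o shift z.2) (t *: 1) - e3 (h (Sy z.2, Sy z.2)))),
             E * (t^-1 *: (((fun u => e1 (h (Sy u, Sy u))) \o shift z.2) (t *: 1) - e1 (h (Sy z.2, Sy z.2)))))).
  apply: funext => t; rewrite ghatE /= scaler0 add0r.
  by apply/pair_equal_spec; split => /=; rewrite -mulrBr scalerAr.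
rewrite eqf; exact: (cvg_pair (cvgMr df1) (cvgMr df2)).
Qed.

Lemma jacE (R : realType) (h : R * R -> R * R * R) (lam : R) (z : R * R) :
  derivable (fun u => e3 (h (Sy u, Sy u))) z.2 1 ->
  derivable (fun u => e1 (h (Sy u, Sy u))) z.2 1 ->
  jac_det2 (ghat h lam) z = lam * (expR (lam * z.1) * expR (lam * z.1)) *
    (e3 (h (Sy z.2, Sy z.2)) * 'D_1 (fun u => e1 (h (Sy u, Sy u))) z.2
     - 'D_1 (fun u => e3 (h (Sy u, Sy u))) z.2 * e1 (h (Sy z.2, Sy z.2))).
Proof.
move=> df1 df2; have dg := diff_ghat lam df1 df2.
rewrite /jac_det2 D10 // D01 //=; ring.
Qed.

Lemma ae_lift (R : realType) (P : R -> Prop) :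
  {ae lebesgue_measure, forall y, P y} -> {ae @leb2 R, forall z, P z.2}.
Proof.
move=> [N [mN N0 NP]]; exists (setT `*` N); split.
- exact: measurableX.
- rewrite /leb2 product_measure1E //.
  rewrite -[RHS](mule0 (lebesgue_measure (setT : set (measurableTypeR R)))); congr (_ * _)%E; exact: N0.
- by move=> z /= nP; split => //; exact: NP.
Qed.

Lemma good_ae (R : realType) (h : R * R -> R * R * R) (L : R) :
  0 < L -> biLipschitz_on_Q L h ->
  {ae lebesgue_measure, forall y : R,
    derivable (fun u => e3 (h (Sy u, Sy u))) y 1 /\
    derivable (fun u => e1 (h (Sy u, Sy u))) y 1 /\
    exists2 d, 0 < d & forall u, `|u - y| < d -> `|Sy u - Sy y| = `|u - y|}.
Proof.
move=> L0 bil.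
have P3 := piece_ae L0 bil (@e3_lip R).
have P1 := piece_ae L0 bil (@e1_lip R).
have NO := ae_not_odd R.
have := ae_and (ae_and P3 P1) NO.
apply: filterS => y [[H3 H1] Hn].
have [k [hk|hk]] := piece_of Hn.
  by split; [exact: (H3 k).1 hk | split; [exact: (H1 k).1 hk | exact: loc_plus hk]].
by split; [exact: (H3 k).2 hk | split; [exact: (H1 k).2 hk | exact: loc_minus hk]].
Qed.

Unset Implicit Arguments.

Theorem lemma7p1 (R : realType) (h : R * R -> R * R * R) (L theta eps hmin lam : R) :
  0 < L ->
  biLipschitz_on_Q L h ->
  sense_preserving h ->
  (forall x, Qsq x -> 0 <= e3 (h x)) ->
  (forall x, Qbd x -> e3 (h x) = 0) ->
  (forall x x', Qsq x -> Qsq x' -> forall s : R, 0 <= s ->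
      h x' = s *: h x -> h x' = h x) ->
  0 < theta < pi / 2 -> 0 < eps ->
  (forall w z, (h @` Qsq) w -> (h @` Qsq) z -> w != z ->
      enorm3 (w - z) <= eps -> theta < acute_angle z w) ->
  (exists2 x0, Qsq x0 & enorm3 (h x0) = hmin) ->
  (forall x, Qsq x -> hmin <= enorm3 (h x)) ->
  0 < hmin ->
  (forall t, -1 <= t <= 1 -> e1 (h (t, t)) = e2 (h (t, t))) ->
  (forall t, -1 <= t <= 1 -> e1 (h (t, - t)) = - e2 (h (t, - t))) ->
  h (0, 0) = (0, 0, 1) ->
  sup [set enorm3 (h x) | x in Qsq] = 1 ->
  1 <= lam ->
  {ae @leb2 R, forall z, differentiable (ghat h lam) z} /\
  {ae @leb2 R, forall z,
     sin theta * hmin * lam * expR (2 * lam * z.1) / (2 * L)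
       <= `|jac_det2 (ghat h lam) z|}.
Proof.
move=> L0 bil _ _ _ _ th eps0 ang _ hminle hmin0 diag _ _ _ lam1.
have G := ae_lift (good_ae L0 bil).
have FF : Filter (nbhs (almost_everywhere (@leb2 R))).
  exact: (ae_filter_ringOfSetsType (@lebesgue_measure R \x @lebesgue_measure R)%E).
split.
  by move: G; apply: filterS => z [df1 [df2 _]]; exact: diff_ghat.
move: G; apply: filterS => z [df1 [df2 lc]].
rewrite jacE //.
have cb := cross_bound L0 bil th eps0 ang hminle hmin0 diag df1 df2 lc.
move: cb; set X := (X in _ <= `|X|) => cb.
set E := expR (lam * z.1).
have E0 : 0 < E by exact: expR_gt0.
have -> : expR (2 * lam * z.1) = E * E by rewrite -expRD; congr expR; ring.
have lam0 : 0 < lam by lra.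
have th' := th; move/andP: th' => [th0 th1].
have pi0 := pi_gt0 R.
have sth : 0 < sin theta by apply: sin_gt0_pi; apply/andP; split => //; lra.
have S0 : 0 <= sin theta * hmin / L by apply: divr_ge0; [rewrite mulr_ge0 // ltW | rewrite ltW].
have EE : 0 < lam * (E * E) by rewrite !mulr_gt0.
rewrite normrM (gtr0_norm EE).
have -> : sin theta * hmin * lam * (E * E) / (2 * L) = lam * (E * E) * (sin theta * hmin / L) / 2.
  by field; rewrite gt_eqF.
have : lam * (E * E) * (sin theta * hmin / L) <= lam * (E * E) * `|X| by rewrite ler_pM2l.
have : 0 <= lam * (E * E) * (sin theta * hmin / L) by rewrite mulr_ge0 // ltW.
lra.
Qed.
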